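(* Let $m\in\{2,3\}$, and let $S\ni h$ be a polarized lattice with $h^2\ge4$ if $m=2$ and $h^2=8$ if $m=3$, which is $(m-1)$-admissible. Let $\Delta$ be a Weyl chamber for $\operatorname{rt}(S,h)$, $\bar P$ the corresponding closed fundamental polyhedron, and $w\in\bar P$ an $m$-isotropic vector. Then: (1) if $h^2=4$ and $m=2$, there are at most two $2$-isotropic vectors in $\bar P$, and if there are two, $w\ne\bar w$, then $w+\bar w=h$; (2) otherwise, $w$ is the unique $m$-isotropic vector in $\bar P$. Furthermore, $l\cdot w\in\{0,1\}$ for each line $l\in\operatorname{Fn}_\Delta(S,h)$ and $e\cdot w\in\{0,1\}$ for each exceptional divisor $e\in\mathfrak{b}(\Delta)$.
   Context: All lattices even; $(S,h)$ polarized means $S$ hyperbolic, $h^2>0$. $\operatorname{root}_n(S,h)=\{r: r^2=-2,\ r\cdot h=n\}$, $\operatorname{rt}(S,h)$ spanned by $\operatorname{root}_0(S,h)$. A Weyl chamber $\Delta$ has positive roots $P_\Delta$ and simple roots $\mathfrak{b}(\Delta)$ (exceptional divisors). $\bar P=\{v\in S\otimes\mathbb{R}: v^2\ge0,\ v\cdot h\ge0,\ v\cdot r\ge0 \text{ for all } r\in P_\Delta \text{ and all roots } r \text{ with } r\cdot h>0\}$. Lines: $\operatorname{Fn}_\Delta(S,h)=\{l\in\operatorname{root}_1(S,h): l\cdot e\ge0\ \forall e\in\mathfrak{b}(\Delta)\}$. $w$ is $m$-isotropic if $w^2=0$, $w\cdot h=m$. $1$-admissible: no $1$-isotropic vector;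 $2$-admissible: $h^2\ge4$ and no $1$- or $2$-isotropic vector. *)

(* Defs.v *)
From HB Require Import structures.
From mathcomp Require Import all_boot all_order all_algebra.
Set Implicit Arguments. Unset Strict Implicit. Unset Printing Implicit Defensive.
Import Order.TTheory GRing.Theory Num.Theory.
Local Open Scope ring_scope.

(* A lattice of rank n is Z^n (row vectors) with an integral Gram matrix G. *)
Definition bf (n : nat) (G : 'M[int]_n) (x y : 'rV[int]_n) : int :=
  (x *m G *m y^T) ord0 ord0.

Definition even_lattice (n : nat) (G : 'M[int]_n) : Prop :=
  G^T = G /\ forall i, (2 %| G i i)%Z.

(* hyperbolic: signature (1, n-1): some positive vector whose orthogonal
   complement is negative definite *)
Definition hyperbolic (n : nat) (G : 'M[int]_n) : Prop :=
  exists v : 'rV[int]_n, 0 < bf G v v /\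
    forall x, bf G x v = 0 -> x != 0 -> bf G x x < 0.

Definition polarized (n : nat) (G : 'M[int]_n) (h : 'rV[int]_n) : Prop :=
  [/\ even_lattice G, hyperbolic G & 0 < bf G h h].

Definition root_n (n : nat) (G : 'M[int]_n) (h : 'rV[int]_n) (k : int)
  (r : 'rV[int]_n) : Prop := bf G r r = -2 /\ bf G r h = k.

(* A Weyl chamber Delta of rt(S,h) is given by a vector delta of S
   (which can be taken in rt(S,h) up to scaling) lying on no wall r^perp,
   r in root_0(S,h).  The chamber is determined by the positive roots. *)
Definition weyl_param (n : nat) (G : 'M[int]_n) (h delta : 'rV[int]_n) : Prop :=
  forall r, root_n G h 0 r -> bf G delta r != 0.

Definition pos_root (n : nat) (G : 'M[int]_n) (h delta r : 'rV[int]_n) : Prop :=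
  root_n G h 0 r /\ 0 < bf G delta r.

(* b(Delta): simple (indecomposable) positive roots = exceptional divisors *)
Definition simple_root (n : nat) (G : 'M[int]_n) (h delta e : 'rV[int]_n) : Prop :=
  pos_root G h delta e /\
  ~ (exists r1 r2, [/\ pos_root G h delta r1, pos_root G h delta r2 & e = r1 + r2]).

Definition in_Pbar (n : nat) (G : 'M[int]_n) (h delta v : 'rV[int]_n) : Prop :=
  [/\ 0 <= bf G v v, 0 <= bf G v h,
      (forall r, pos_root G h delta r -> 0 <= bf G v r) &
      (forall r, bf G r r = -2 -> 0 < bf G r h -> 0 <= bf G v r)].

Definition line (n : nat) (G : 'M[int]_n) (h delta l : 'rV[int]_n) : Prop :=
  root_n G h 1 l /\ forall e, simple_root G h delta e -> 0 <= bf G l e.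

Definition isotropic (n : nat) (G : 'M[int]_n) (h : 'rV[int]_n) (m : int)
  (w : 'rV[int]_n) : Prop := bf G w w = 0 /\ bf G w h = m.

Definition admissible1 (n : nat) (G : 'M[int]_n) (h : 'rV[int]_n) : Prop :=
  ~ (exists w, isotropic G h 1 w).

Definition admissible2 (n : nat) (G : 'M[int]_n) (h : 'rV[int]_n) : Prop :=
  4 <= bf G h h /\ ~ (exists w, isotropic G h 1 w \/ isotropic G h 2 w).

(* Main.v *)
Require Import Defs.
From HB Require Import structures.
From mathcomp Require Import all_boot all_order all_algebra zify ring lra.
Import Order.TTheory GRing.Theory Num.Theory.
Local Open Scope ring_scope.

Section BF.
Variables (n : nat) (G : 'M[int]_n).
Implicit Types x y z : 'rV[int]_n.

Lemma bfDl x y z : bf G (x + y) z = bf G x z + bf G y z.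
Proof. by rewrite /bf !mulmxDl mxE. Qed.
Lemma bfDr x y z : bf G z (x + y) = bf G z x + bf G z y.
Proof. by rewrite /bf linearD /= mulmxDr mxE. Qed.
Lemma bfZl (a : int) x z : bf G (a *: x) z = a * bf G x z.
Proof. by rewrite /bf -!scalemxAl mxE. Qed.
Lemma bfZr (a : int) x z : bf G z (a *: x) = a * bf G z x.
Proof. by rewrite /bf linearZ /= -scalemxAr mxE. Qed.
Lemma bfNl x z : bf G (- x) z = - bf G x z.
Proof. by rewrite -scaleN1r bfZl mulN1r. Qed.
Lemma bfNr x z : bf G z (- x) = - bf G z x.
Proof. by rewrite -scaleN1r bfZr mulN1r. Qed.
Lemma bf0l z : bf G 0 z = 0.
Proof. by rewrite /bf !mul0mx mxE. Qed.
Lemma bfC x y : G^T = G -> bf G x y = bf G y x.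
Proof.
move=> GT; rewrite /bf.
have <- : (y *m G *m x^T)^T = x *m G *m y^T by rewrite !trmx_mul trmxK GT mulmxA.
by rewrite mxE.
Qed.

Lemma scale_eq0 (b : int) x : b != 0 -> b *: x = 0 -> x = 0.
Proof.
move=> b0 /matrixP E; apply/matrixP => i j; move: (E i j); rewrite !mxE.
by move/eqP; rewrite mulf_eq0 (negbTE b0) /= => /eqP.
Qed.

Variable h : 'rV[int]_n.
Hypothesis GT : G^T = G.
Hypothesis hyp : hyperbolic G.
Hypothesis hpos : 0 < bf G h h.

Ltac expand := rewrite ?(bfDl, bfDr, bfNl, bfNr, bfZl, bfZr).

Lemma hodge0 x : bf G x h = 0 -> bf G x x < 0 \/ x = 0.
Proof.
move=> xh; case: hyp => v [vpos vneg].
have hx : bf G h x = 0 by rewrite bfC.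
have hv : bf G h v != 0.
  apply/eqP => hv0.
  have h0 : h != 0 by apply/eqP => h0; move: hpos; rewrite h0 bf0l.
  have := vneg h hv0 h0; lia.
pose a := bf G x v; pose b := - bf G h v.
pose y := a *: h + b *: x.
have yv : bf G y v = 0 by rewrite /y; expand; rewrite /a /b; ring.
have yy : bf G y y = a^+2 * bf G h h + b^+2 * bf G x x.
  by rewrite /y; expand; rewrite xh hx; ring.
have [y0|yn0] := eqVneq y 0.
  have : bf G y h = a * bf G h h by rewrite /y; expand; rewrite xh; ring.
  rewrite y0 bf0l => /esym /eqP; rewrite mulf_eq0 => /orP[/eqP a0|]; last by lia.
  move: y0; rewrite /y a0 scale0r add0r => /scale_eq0 -> //; first by right.
  by rewrite /b oppr_eq0.
have := vneg y yv yn0; rewrite yy.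
case: (ltrP (bf G x x) 0) => [|xx]; first by left.
move=> H; exfalso; have: 0 <= a ^+ 2 * bf G h h + b ^+ 2 * bf G x x.
  apply: addr_ge0; apply: mulr_ge0 => //; [exact: sqr_ge0| exact: ltW | exact: sqr_ge0].
lia.
Qed.

Lemma hodge x : bf G h h * bf G x x <= (bf G x h)^+2.
Proof.
pose c := bf G x h; pose z := bf G h h *: x - c *: h.
have zh : bf G z h = 0 by rewrite /z; expand; rewrite /c; ring.
have hx : bf G h x = c by rewrite bfC.
have zz : bf G z z = bf G h h * (bf G h h * bf G x x - c^+2).
  by rewrite /z; expand; rewrite hx -/c; ring.
have : bf G z z <= 0 by case: (@hodge0 z zh) => [/ltW //| ->]; rewrite bf0l.
rewrite zz -/c => H; nia.
Qed.

Lemma pairP (m : int) a b : isotropic G h m a -> isotropic G h m b ->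
  (a = b \/ 0 < bf G a b) /\ bf G h h * bf G a b <= 2 * m^+2.
Proof.
move=> [aa ah] [bb bh]; split.
  have zh : bf G (a - b) h = 0 by expand; rewrite ah bh subrr.
  have ba : bf G b a = bf G a b by rewrite bfC.
  case: (@hodge0 _ zh).
    by expand; rewrite aa bb ba => H; right; lia.
  by move/eqP; rewrite subr_eq0 => /eqP; left.
have := hodge (a + b); expand; rewrite aa bb ah bh (bfC b a) //; nia.
Qed.

Lemma root1 delta a b : weyl_param G h delta ->
  in_Pbar G h delta a -> in_Pbar G h delta b ->
  bf G a a = 0 -> bf G b b = 0 -> bf G a h = bf G b h -> bf G a b = 1 -> False.
Proof.
move=> W [_ _ Pa _] [_ _ Pb _] aa bb abh ab.
have ba : bf G b a = 1 by rewrite bfC.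
have rr : bf G (a - b) (a - b) = -2 by expand; rewrite aa bb ab ba.
have rh : bf G (a - b) h = 0 by expand; rewrite abh subrr.
have := W (a - b) (conj rr rh).
case: (ltrgtP 0 (bf G delta (a - b))) => // H _.
  have := Pa (a - b) (conj (conj rr rh) H); expand; rewrite aa ab; lia.
have : pos_root G h delta (- (a - b)).
  split; [split|].
  - by rewrite bfNl bfNr opprK rr.
  - by rewrite bfNl rh oppr0.
  - rewrite bfNr; lia.
move/Pb; expand; rewrite bb ba; lia.
Qed.
End BF.
Arguments bfC {n G} x y.
Arguments pairP {n G h} GT hyp hpos {m a b}.
Arguments root1 {n G h} GT hpos {delta a b}.
Arguments hodge0 {n G h} GT hyp hpos {x}.
Arguments hodge {n G h} GT hyp hpos x.

Ltac expand := rewrite ?(bfDl, bfDr, bfNl, bfNr, bfZl, bfZr).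

Lemma uniqP n (G : 'M[int]_n) (h delta a b : 'rV[int]_n) (m : nat) :
  (m = 2%N \/ m = 3%N) -> polarized G h ->
  (m = 2%N -> 4 <= bf G h h) -> (m = 3%N -> bf G h h = 8) ->
  (m = 3%N -> admissible2 G h) -> weyl_param G h delta ->
  in_Pbar G h delta a -> in_Pbar G h delta b ->
  isotropic G h m%:Z a -> isotropic G h m%:Z b ->
  a = b \/ (bf G h h = 4 /\ m = 2%N /\ a + b = h).
Proof.
move=> hm [[GT _] hyp hpos] H2 H3 A2 W Pa Pb Ia Ib.
have [[->|dpos] dle] := pairP GT hyp hpos Ia Ib; first by left.
move: Ia Ib => [aa ah] [bb bh].
have d1 : bf G a b != 1.
  by apply/eqP; apply: (root1 GT hpos W Pa Pb aa bb); rewrite ah bh.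
have ba : bf G b a = bf G a b by rewrite bfC.
case: hm => mE; subst m.
- have Hge := H2 erefl.
  have [d2 H4] : bf G a b = 2 /\ bf G h h = 4 by move: dle d1; rewrite expr2; nia.
  right; split => //; split => //.
  have zh : bf G (a + b - h) h = 0 by expand; rewrite ah bh H4.
  case: (hodge0 GT hyp hpos zh).
    expand; rewrite ?(bfC h a GT) ?(bfC h b GT) ?ba aa bb ah bh H4 d2; lia.
  by move/eqP; rewrite subr_eq0 => /eqP.
- have H8 := H3 erefl.
  have d2 : bf G a b = 2 by move: dle d1; rewrite H8 expr2; nia.
  exfalso; apply: (proj2 (A2 erefl)); exists (h - a - b); right; split.
    expand; rewrite ?(bfC h a GT) ?(bfC h b GT) ?ba aa bb ah bh H8 d2; lia.
  expand; rewrite ah bh H8; lia.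
Qed.

Theorem lemma2p15 (n : nat) (G : 'M[int]_n) (h delta w : 'rV[int]_n) (m : nat) :
  (m = 2%N \/ m = 3%N) ->
  polarized G h ->
  (m = 2%N -> 4 <= bf G h h) ->
  (m = 3%N -> bf G h h = 8) ->
  (m = 2%N -> admissible1 G h) ->
  (m = 3%N -> admissible2 G h) ->
  weyl_param G h delta ->
  in_Pbar G h delta w ->
  isotropic G h m%:Z w ->
  [/\ (bf G h h = 4 /\ m = 2%N ->
        (forall a b c,
           isotropic G h 2 a -> in_Pbar G h delta a ->
           isotropic G h 2 b -> in_Pbar G h delta b ->
           isotropic G h 2 c -> in_Pbar G h delta c ->
           [\/ a = b, a = c | b = c]) /\
        (forall w', isotropic G h 2 w' -> in_Pbar G h delta w' ->
           w' != w -> w + w' = h)),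
      (~ (bf G h h = 4 /\ m = 2%N) ->
        forall w', isotropic G h m%:Z w' -> in_Pbar G h delta w' -> w' = w),
      (forall l, line G h delta l -> bf G l w = 0 \/ bf G l w = 1) &
      (forall e, simple_root G h delta e -> bf G e w = 0 \/ bf G e w = 1)].
Proof.
move=> hm pol H2 H3 A1 A2 W Pw Iw.
have pol' := pol; case: pol' => [[GT _] hyp hpos].
have U := fun a b => @uniqP n G h delta a b m hm pol H2 H3 A2 W.
split.
- case=> H4 m2; split.
  + move=> a b c Ia Pa Ib Pb Ic Pc.
    have Ia' : isotropic G h m%:Z a by rewrite m2.
    have Ib' : isotropic G h m%:Z b by rewrite m2.
    have Ic' : isotropic G h m%:Z c by rewrite m2.
    case: (U a b Pa Pb Ia' Ib') => [->|[_ [_ ab]]]; first by apply: Or31.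
    case: (U a c Pa Pc Ia' Ic') => [->|[_ [_ ac]]]; first by apply: Or32.
    by apply: Or33; apply: (addrI a); rewrite ab ac.
  + move=> w' Iw' Pw' ne.
    have Iw'' : isotropic G h m%:Z w' by rewrite m2.
    case: (U w w' Pw Pw' Iw Iw'') => [E|[_ [_ E]]] //.
    by rewrite E eqxx in ne.
- move=> nH w' Iw' Pw'; case: (U w' w Pw' Pw Iw' Iw) => [//|[H4 [m2 _]]].
  by exfalso; apply: nH.
- move=> l [[ll lh] _].
  case: (Pw) => [_ _ _ P4].
  have k0 : 0 <= bf G w l by apply: P4 => //; rewrite lh.
  rewrite (bfC l w GT).
  case: (Iw) => ww wh.
  case: hm => mE; subst m.
  + have := hodge GT hyp hpos (w + l); expand.
    rewrite ?(bfC l w GT) ?(bfC h w GT) ?(bfC h l GT) ww ll wh lh => Hd.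
    have H4 := H2 erefl.
    case: (lerP (bf G w l) 1) => [k1|k2]; first lia.
    exfalso; have [k2' H4'] : bf G w l = 2 /\ bf G h h = 4 by nia.
    apply: (A1 erefl); exists (h - l - w); split; expand;
      rewrite ?(bfC l w GT) ?(bfC h w GT) ?(bfC h l GT) ?ww ?ll ?wh ?lh ?k2' ?H4'; lia.
  + have := hodge GT hyp hpos (3 *: w + 2 *: l); expand.
    rewrite ?(bfC l w GT) ?(bfC h w GT) ?(bfC h l GT) ww ll wh lh (H3 erefl) => Hd.
    nia.
- move=> e [[[ee eh] dpos] _].
  case: (Pw) => [_ _ P3 _].
  have k0 : 0 <= bf G w e by apply: P3; split.
  rewrite (bfC e w GT).
  case: (Iw) => ww wh.
  have Iw' : isotropic G h m%:Z (w + bf G w e *: e).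
    split; expand; rewrite ?(bfC e w GT) ?ww ?ee ?wh ?eh; nia.
  have [_ dle] := pairP GT hyp hpos Iw Iw'.
  move: dle; expand; rewrite ww.
  case: hm => mE; subst m.
  + have := H2 erefl; nia.
  + rewrite (H3 erefl); nia.
Qed.
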